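(* Let $Q$ be a quiver (no framing, arbitrary orientation) whose underlying graph is the affine Dynkin graph $\widetilde{A}_r$ (a cycle with $r+1$ vertices and $r+1$ edges; for $r=0$ a single loop), let $\beta=(n,\dots,n)$, and put the complete standard filtration at each vertex. Then $\mathbb{C}[\mathfrak{b}^{\oplus r+1}]^{\mathbb{U}_\beta}\cong\mathbb{C}[\mathfrak{t}^{\oplus r+1}]$, i.e. the invariant ring is the subalgebra generated by the diagonal entries of the $r+1$ matrices.
   Context: At each vertex put $\mathbb{C}^n$ with the flag $0\subset\mathbb{C}^1\subset\cdots\subset\mathbb{C}^n$ of standard coordinate subspaces; the filtered representation space is $\mathfrak{b}^{\oplus Q_1}$, tuples $(A_a)$ of upper triangular $n\times n$ matrices, one per arrow. $\mathbb{U}_\beta=U^{Q_0}$, $U$ the upper unitriangular $n\times n$ matrices, acting by $(u_i)\cdot(A_a)=(u_{h(a)}A_au_{t(a)}^{-1})$ with $h,t$ head and tail. $\mathfrak{t}$ denotes diagonal matrices. *)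

(* Defs.v *)
From HB Require Import structures.
From mathcomp Require Import all_boot all_order all_algebra.
From mathcomp Require Import reals.
From mathcomp Require Import complex.
From mathcomp Require Import mpoly.

Set Implicit Arguments.
Unset Strict Implicit.
Unset Printing Implicit Defensive.

Import Order.TTheory GRing.Theory Num.Theory.
Local Open Scope ring_scope.

(* Quiver with underlying graph the affine Dynkin graph ~A_r:
   vertices 'I_r.+1, arrows 'I_r.+1; arrow a joins vertex a and vertex a+1
   (mod r+1); the orientation o a decides the direction:
   o a = true : a -> a+1,  o a = false : a+1 -> a.
   For r = 0 this is a single loop at the unique vertex. *)
Definition cyc_next (r : nat) (v : 'I_r.+1) : 'I_r.+1 := ordS v.

Definition qhead (r : nat) (o : 'I_r.+1 -> bool) (a : 'I_r.+1) : 'I_r.+1 :=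
  if o a then cyc_next a else a.
Definition qtail (r : nat) (o : 'I_r.+1 -> bool) (a : 'I_r.+1) : 'I_r.+1 :=
  if o a then a else cyc_next a.

(* upper triangular (= stabilizer of the standard complete flag) *)
Definition upper_tri (F : nzRingType) (n : nat) (A : 'M[F]_n) : Prop :=
  forall i j : 'I_n, (j < i)%N -> A i j = 0.

Definition unitri (F : nzRingType) (n : nat) (u : 'M[F]_n) : Prop :=
  upper_tri u /\ forall i : 'I_n, u i i = 1.

(* Coordinates of b^{+(r+1)}: the entry (i,j), i <= j, of the matrix at arrow a *)
Definition bidx (r n : nat) :=
  {x : 'I_r.+1 * ('I_n * 'I_n) | (x.2.1 <= x.2.2)%N}.

Definition nbvars (r n : nat) : nat := #|{: bidx r n}|.

Definition coord_ring (F : nzRingType) (r n : nat) := {mpoly F[nbvars r n]}.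

Definition bcoords (F : nzRingType) (r n : nat) (A : 'I_r.+1 -> 'M[F]_n)
  : 'I_(nbvars r n) -> F :=
  fun k => let x := val (enum_val k) in A x.1 x.2.1 x.2.2.

Definition uact (F : comUnitRingType) (r n : nat) (o : 'I_r.+1 -> bool)
  (u : 'I_r.+1 -> 'M[F]_n) (A : 'I_r.+1 -> 'M[F]_n) : 'I_r.+1 -> 'M[F]_n :=
  fun a => u (qhead o a) *m A a *m invmx (u (qtail o a)).

Definition U_invariant (F : comUnitRingType) (r n : nat) (o : 'I_r.+1 -> bool)
  (p : {mpoly F[nbvars r n]}) : Prop :=
  forall (u : 'I_r.+1 -> 'M[F]_n) (A : 'I_r.+1 -> 'M[F]_n),
    (forall v, unitri (u v)) -> (forall a, upper_tri (A a)) ->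
    p.@[bcoords (uact o u A)] = p.@[bcoords A].

(* Coordinates of t^{+(r+1)}: diagonal entry i of the matrix at arrow a *)
Definition ntvars (r n : nat) : nat := #|{: 'I_r.+1 * 'I_n}|.

Definition diag_bidx (r n : nat) (x : 'I_r.+1 * 'I_n) : bidx r n :=
  @exist _ (fun y : 'I_r.+1 * ('I_n * 'I_n) => (y.2.1 <= y.2.2)%N)
    (x.1, (x.2, x.2)) (leqnn x.2).

Definition diag_vars (F : nzRingType) (r n : nat)
  : (ntvars r n).-tuple {mpoly F[nbvars r n]} :=
  [tuple 'X_(enum_rank (diag_bidx (enum_val k))) | k < ntvars r n].

(* Main.v *)
Require Import Defs.
From HB Require Import structures.
From mathcomp Require Import all_boot all_order all_algebra.
From mathcomp Require Import reals.
From mathcomp Require Import complex.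
From mathcomp Require Import mpoly.
From mathcomp Require Import ring lra zify.
Set Implicit Arguments.
Unset Strict Implicit.
Unset Printing Implicit Defensive.
Import Order.TTheory GRing.Theory Num.Theory ComplexField.Normc.
Local Open Scope ring_scope.
Section Mx.
Variable F : fieldType.
Variable n : nat.
Implicit Types A B w : 'M[F]_n.

Lemma upper_mul A B : upper_tri A -> upper_tri B -> upper_tri (A *m B).
Proof.
move=> hA hB i j ji; rewrite mxE big1 // => k _.
case: (ltnP k i) => [ki|ik]; first by rewrite hA ?mul0r.
by rewrite hB ?mulr0 // (leq_trans ji ik).
Qed.

Lemma diag_mul A B i : upper_tri A -> upper_tri B -> (A *m B) i i = A i i * B i i.
Proof.
move=> hA hB; rewrite mxE (bigD1 i) //= big1 ?addr0 // => k nki.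
case: (ltngtP k i) => [ki|ik|e]; first by rewrite hA ?mul0r.
  by rewrite hB ?mulr0.
by move: nki; rewrite (val_inj e) eqxx.
Qed.

Lemma unitri_inv w : unitri w -> unitri (invmx w).
Proof.
move=> [hu hd]; case: (boolP (w \in unitmx)) => wu; last by rewrite /invmx (negbTE wu).
set W := invmx w.
have WW : W *m w = 1%:M by rewrite mulVmx.
have up : upper_tri W.
  move=> i j; move: {2}(val j) (erefl (val j)) => m; move: m j.
  elim/ltn_ind => m IH j ej ji.
  have := congr1 (fun M : 'M[F]_n => M i j) WW; rewrite !mxE (bigD1 j) //= big1.
    rewrite hd mulr1 addr0 => ->.
    by rewrite -val_eqE /= (gtn_eqF ji).
  move=> k nkj; case: (ltngtP k j) => [kj|jk|e].
  - rewrite (IH k) ?mul0r //; first by rewrite -ej.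
    exact: ltn_trans ji.
  - by rewrite hu ?mulr0.
  - by move: nkj; rewrite (val_inj e) eqxx.
split=> // i; have := congr1 (fun M : 'M[F]_n => M i i) WW.
by rewrite diag_mul // hd mulr1 mxE eqxx.
Qed.

End Mx.
Section Elu.
Variable F : fieldType.
Variable n : nat.
Implicit Types B : 'M[F]_n.

Definition elu (i j : 'I_n) (c : F) : 'M[F]_n := 1%:M + c *: delta_mx i j.

Lemma dmxl B (i j k l : 'I_n) : (delta_mx i j *m B) k l = (k == i)%:R * B j l.
Proof.
rewrite mxE (bigD1 j) //= big1 ?addr0; first by rewrite mxE eqxx andbT.
by move=> m /negbTE hm; rewrite mxE hm andbF mul0r.
Qed.

Lemma dmxr B (i j k l : 'I_n) : (B *m delta_mx i j) k l = (l == j)%:R * B k i.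
Proof.
rewrite mxE (bigD1 i) //= big1 ?addr0; first by rewrite mxE eqxx /= mulrC.
by move=> m /negbTE hm; rewrite mxE hm mulr0.
Qed.

Lemma elu_entry (i j k l : 'I_n) c :
  elu i j c k l = (k == l)%:R + c * ((k == i) && (l == j))%:R.
Proof. by rewrite !mxE. Qed.

Lemma elu_unitri (i j : 'I_n) c : (i < j)%N -> unitri (elu i j c).
Proof.
move=> ij; split.
  move=> k l lk; rewrite elu_entry.
  have -> : (k == l) = false by rewrite -val_eqE /= gtn_eqF.
  case: (boolP ((k == i) && (l == j))) => [/andP[/eqP ki /eqP lj]|_].
    by move: lk; rewrite ki lj => /(ltn_trans ij); rewrite ltnn.
  by rewrite mulr0 addr0.
move=> k; rewrite elu_entry eqxx.
case: (boolP ((k == i) && (k == j))) => [/andP[/eqP ki /eqP kj]|_].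
  by move: ij; rewrite -ki -kj ltnn.
by rewrite mulr0 addr0.
Qed.

Lemma elu_mul (i j : 'I_n) c : i != j -> elu i j c *m elu i j (- c) = 1%:M.
Proof.
move=> ij; rewrite /elu mulmxDl !mulmxDr !mul1mx !mulmx1 -!scalemxAl -!scalemxAr.
rewrite mul_delta_mx_0 1?eq_sym // !scaler0 addr0 scaleNr.
  by rewrite subrK.
Qed.

Lemma elu_inv (i j : 'I_n) c : i != j -> invmx (elu i j c) = elu i j (- c).
Proof.
move=> ij; have h := elu_mul c ij; have [u1 _] := mulmx1_unit h.
by rewrite -[invmx _]mulmx1 -h mulmxA mulVmx // mul1mx.
Qed.

Lemma elu_conj (i j : 'I_n) c1 c2 B (k l : 'I_n) : B j i = 0 ->
  (elu i j c1 *m B *m elu i j (- c2)) k l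
  = B k l + c1 * (k == i)%:R * B j l - c2 * (l == j)%:R * B k i.
Proof.
move=> Bji; rewrite /elu !(mulmxDl, mulmxDr) !(mul1mx, mulmx1).
have eD (M N : 'M[F]_n) k' l' : (M + N) k' l' = M k' l' + N k' l' by rewrite mxE.
have eZ (a : F) (M : 'M[F]_n) k' l' : (a *: M) k' l' = a * M k' l' by rewrite mxE.
rewrite -!scalemxAl -!scalemxAr !eD !eZ dmxr !dmxl dmxr.
rewrite dmxl Bji; ring.
Qed.

End Elu.
Section KS.
Variable F : fieldType.
Variables (r n : nat) (o : 'I_r.+1 -> bool).
Variable A : 'I_r.+1 -> 'M[F]_n.
Hypothesis Aup : forall a, upper_tri (A a).
Variables (i j : 'I_n) (x : 'I_r.+1 -> F).
Hypothesis ij : (i < j)%N.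

Definition ksu := fun v => elu i j (x v).

Lemma ij_neq : i != j.
Proof. by rewrite -val_eqE /= ltn_eqF. Qed.

Lemma ks_entry a k l : uact o ksu A a k l =
  A a k l + x (qhead o a) * (k == i)%:R * A a j l
          - x (qtail o a) * (l == j)%:R * A a k i.
Proof. by rewrite /uact /ksu elu_inv ?ij_neq // elu_conj // Aup. Qed.

Lemma ks_upper a : upper_tri (uact o ksu A a).
Proof.
move=> k l lk; rewrite ks_entry Aup // add0r.
have t1 : (k == i)%:R * A a j l = 0.
  case: (eqVneq k i) => [ki|_]; last by rewrite mul0r.
  by rewrite Aup ?mulr0 // (ltn_trans _ ij) // -ki.
have t2 : (l == j)%:R * A a k i = 0.
  case: (eqVneq l j) => [lj|_]; last by rewrite mul0r.
  by rewrite Aup ?mulr0 // (ltn_trans ij) // -lj.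
by rewrite -!mulrA t1 t2 !mulr0 subr0.
Qed.

Lemma ks_same a (k l : 'I_n) : (k <= l)%N -> (l - k <= j - i)%N ->
  ~~ ((k == i) && (l == j)) -> uact o ksu A a k l = A a k l.
Proof.
move=> kl gap nkl; rewrite ks_entry.
have t1 : (k == i)%:R * A a j l = 0.
  case: (eqVneq k i) => [ki|_]; last by rewrite mul0r.
  subst k; move: nkl; rewrite eqxx /= => nlj.
  case: (ltngtP l j) => [lj|jl|e].
  - by rewrite Aup ?mulr0.
  - exfalso; move: gap jl ij kl; clear; lia.
  - by move: nlj; rewrite -val_eqE /= e eqxx.
have t2 : (l == j)%:R * A a k i = 0.
  case: (eqVneq l j) => [lj|_]; last by rewrite mul0r.
  subst l; move: nkl; rewrite eqxx andbT => nki.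
  case: (ltngtP k i) => [ki|ik|e].
  - exfalso; move: gap ki ij kl; clear; lia.
  - by rewrite Aup ?mulr0.
  - by move: nki; rewrite -val_eqE /= e eqxx.
by rewrite -!mulrA t1 t2 !mulr0 subr0 addr0.
Qed.

Lemma ks_diag a (k : 'I_n) : uact o ksu A a k k = A a k k.
Proof.
apply: ks_same => //; first by rewrite subnn.
apply/negP => /andP[/eqP ki /eqP kj]; move: ij; by rewrite -ki -kj ltnn.
Qed.

Lemma ks_ij a : uact o ksu A a i j =
  A a i j + x (qhead o a) * A a j j - x (qtail o a) * A a i i.
Proof. by rewrite ks_entry !eqxx !mulr1. Qed.

End KS.
Section Gen.
Variable F : fieldType.
Variables (r n : nat) (o : 'I_r.+1 -> bool).

Definition Mmat (D : 'I_r.+1 -> 'M[F]_n) (i j : 'I_n) : 'M[F]_(r.+1) :=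
  \matrix_(v, a) ((v == qhead o a)%:R * D a j j - (v == qtail o a)%:R * D a i i).

Lemma Mmat_entry D i j v a : Mmat D i j v a =
  (v == qhead o a)%:R * D a j j - (v == qtail o a)%:R * D a i i.
Proof. by rewrite mxE. Qed.

Definition good D := forall i j : 'I_n, (i < j)%N -> \det (Mmat D i j) != 0.

Lemma sum_delta (y : 'I_r.+1 -> F) c d : \sum_v y v * ((v == c)%:R * d) = y c * d.
Proof.
rewrite (bigD1 c) //= eqxx mul1r big1 ?addr0 // => v /negbTE ->.
by rewrite mul0r mulr0.
Qed.

Lemma solve D i j (b : 'I_r.+1 -> F) : \det (Mmat D i j) != 0 ->
  exists x : 'I_r.+1 -> F,
    forall a, x (qhead o a) * D a j j - x (qtail o a) * D a i i = b a.
Proof.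
move=> hd; have hu : Mmat D i j \in unitmx by rewrite unitmxE unitfE.
pose y := \row_a b a *m invmx (Mmat D i j).
exists (fun v => y 0 v) => a.
have : (y *m Mmat D i j) 0 a = b a by rewrite /y -mulmxA mulVmx // mulmx1 mxE.
rewrite mxE => <-.
under [RHS]eq_bigr do rewrite Mmat_entry mulrBr.
by rewrite sumrB !sum_delta.
Qed.

Definition diagpart (A : 'I_r.+1 -> 'M[F]_n) : 'I_r.+1 -> 'M[F]_n :=
  fun a => \matrix_(k, l) ((k == l)%:R * A a k l).

Definition Zc (A : 'I_r.+1 -> 'M[F]_n) g m := forall a (k l : 'I_n), (k < l)%N ->
  ((l - k < g)%N || ((l - k == g) && (k < m))%N) -> A a k l = 0.

Lemma good_diag (A B : 'I_r.+1 -> 'M[F]_n) : (forall a k, A a k k = B a k k) -> good A -> good B.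
Proof.
move=> e gA i j ij; suff -> : Mmat B i j = Mmat A i j by apply: gA.
by apply/matrixP => v a; rewrite !mxE !e.
Qed.

Lemma bc_eq (q : {mpoly F[nbvars r n]}) (A B : 'I_r.+1 -> 'M[F]_n) :
  (forall a k l, A a k l = B a k l) -> q.@[bcoords A] = q.@[bcoords B].
Proof. by move=> e; apply: meval_eq => k; rewrite /bcoords e. Qed.

Lemma diagpart_eq (A B : 'I_r.+1 -> 'M[F]_n) : (forall a k, A a k k = B a k k) ->
  forall a k l, diagpart A a k l = diagpart B a k l.
Proof.
move=> e a k l; rewrite !mxE.
by case: (eqVneq k l) => [->|_]; rewrite ?e // !mul0r.
Qed.

Lemma diag_full (A : 'I_r.+1 -> 'M[F]_n) g m : (n <= g)%N -> (forall a, upper_tri (A a)) -> Zc A g m ->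
  forall a k l, diagpart A a k l = A a k l.
Proof.
move=> ng Aup zA a k l; rewrite !mxE.
case: (ltngtP k l) => [kl|lk|e].
- rewrite zA // ?mulr0 //; apply/orP; left.
  by move: (ltn_ord l) ng; clear; lia.
- by rewrite Aup ?mulr0.
- by rewrite (val_inj e) eqxx mul1r.
Qed.

Variable p : {mpoly F[nbvars r n]}.
Hypothesis Hinv : U_invariant o p.

Lemma main_ind d : forall g m, ((n - g) * n.+1 + (n - m) <= d)%N -> (0 < g)%N ->
  forall A, (forall a, upper_tri (A a)) -> good A -> Zc A g m ->
  p.@[bcoords A] = p.@[bcoords (diagpart A)].
Proof.
elim: d => [|d IH] g m hd g0 A Aup gA zA;
  (case: (leqP n g) => ng; first by apply: bc_eq => a k l; rewrite (diag_full ng Aup zA)).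
  exfalso; move: hd ng; clear; nia.
case: (leqP n (m + g)) => mg.
  apply: (IH g.+1 0) => //.
    move: hd ng mg; clear; nia.
  move=> a k l kl /orP [h|]; last by rewrite ltn0 andbF.
  have [h1|h2] : (l - k < g)%N \/ (l - k = g)%N by move: h; clear; lia.
    by apply: zA => //; rewrite h1.
  apply: zA => //; apply/orP; right; rewrite h2 eqxx /=.
  have := ltn_ord l; move: h2 mg kl; clear; lia.
have mn : (m < n)%N by move: mg; clear; lia.
pose i := Ordinal mn; pose j := Ordinal mg.
have ij : (i < j)%N by rewrite /= -{1}[m]addn0 ltn_add2l.
have [x hx] := solve (fun a => - A a i j) (gA i j ij).
pose A' := uact o (ksu i j x) A.
have A'up : forall a, upper_tri (A' a) by move=> a; apply: ks_upper.
have A'd : forall a k, A a k k = A' a k k by move=> a k; rewrite /A' ks_diag.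
transitivity p.@[bcoords A'].
  symmetry; apply: Hinv => // v; exact: elu_unitri.
rewrite (bc_eq _ (diagpart_eq A'd)).
apply: (IH g m.+1) => //.
  move: hd (mn); nia.
  exact: good_diag gA.
move=> a k l kl hkl.
case: (boolP ((k == i) && (l == j))) => [/andP[/eqP -> /eqP ->]|nkl].
  by rewrite /A' ks_ij // -addrA hx subrr.
have gap : (l - k <= j - i)%N.
  rewrite /= addKn; move: hkl; clear; case/orP; [lia|case/andP => /eqP; lia].
rewrite /A' ks_same //; last exact: ltnW.
apply: zA => //; case/orP: hkl => [->//|/andP[/eqP e km]].
apply/orP; right; rewrite e eqxx /=.
rewrite ltnS leq_eqVlt in km; case/orP: km => [/eqP km|//].
exfalso; move: nkl; rewrite -!val_eqE /= km eqxx /=.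
have : (nat_of_ord l = m + g)%N by move: e kl; rewrite km; clear; lia.
by move=> ->; rewrite eqxx.
Qed.

Theorem gen_case (A : 'I_r.+1 -> 'M[F]_n) : (forall a, upper_tri (A a)) -> good A ->
  p.@[bcoords A] = p.@[bcoords (diagpart A)].
Proof.
move=> Aup gA; apply: (@main_ind ((n - 1) * n.+1 + n) 1 0) => //.
  by rewrite subn0.
by move=> a k l kl; rewrite ltn0 andbF orbF; move: kl; clear; lia.
Qed.

End Gen.
Section Ident.

Lemma mpoly_morph_eq (R : ringType) k (S : ringType) (f g : {mpoly R[k]} -> S) :
  {morph f : x y / x + y} -> {morph g : x y / x + y} ->
  {morph f : x y / x * y} -> {morph g : x y / x * y} ->
  f 1 = 1 -> g 1 = 1 ->
  (forall c, f c%:MP = g c%:MP) -> (forall i, f 'X_i = g 'X_i) -> f =1 g.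
Proof.
move=> fD gD fM gM f1 g1 fC fX.
have fX' : forall m, f 'X_[m] = g 'X_[m].
  move=> m; rewrite mpolyXE_id.
  rewrite (big_morph f fM f1) (big_morph g gM g1); apply: eq_bigr => i _.
  elim: (m i) => [|e IH]; first by rewrite !expr0 f1 g1.
  by rewrite !exprS fM gM IH fX.
elim/mpolyind => [|c m q _ _ IH]; first by rewrite -mpolyC0 fC.
by rewrite fD gD IH -mul_mpolyC fM gM fC fX'.
Qed.

Variable F : numDomainType.

Lemma poly_vanish (P : {poly F}) : (forall s, P.[s] = 0) -> P = 0.
Proof.
move=> h; apply/eqP; apply: contraT => nz.
have := max_poly_roots nz (rs := [seq i%:R | i <- iota 0 (size P)]).
rewrite size_map size_iota ltnn; apply.
  by apply/allP => x /mapP [i _ ->]; rewrite /root h.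
by rewrite map_inj_uniq ?iota_uniq // => a b /eqP; rewrite eqr_nat => /eqP.
Qed.

Definition Xf k (i : 'I_k.+1) : {poly {mpoly F[k]}} :=
  if unlift ord_max i is Some j then ('X_j)%:P else 'X.

Definition phi k (h : {mpoly F[k.+1]}) : {poly {mpoly F[k]}} :=
  mmap (polyC \o (@mpolyC k F)) (@Xf k) h.

Definition psi k (P : {poly {mpoly F[k]}}) : {mpoly F[k.+1]} :=
  (map_poly (@mwiden k F) P).['X_ord_max].

Definition ext k (v : 'I_k -> F) (s : F) (i : 'I_k.+1) : F :=
  if unlift ord_max i is Some j then v j else s.

Lemma psi_phi k (h : {mpoly F[k.+1]}) : psi (phi h) = h.
Proof.
apply: (@mpoly_morph_eq _ _ _ (fun h => psi (phi h)) id) => //=.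
- by move=> x y; rewrite /psi /phi !rmorphD hornerD.
- by move=> x y; rewrite /psi /phi !rmorphM hornerM.
- by rewrite /psi /phi rmorph1 rmorph1 hornerC.
-   by move=> c; rewrite /psi /phi mmapC /= map_polyC hornerC; exact: mwidenC.
- move=> i; rewrite /psi /phi mmapX mmap1U /Xf.
  case: unliftP => [j ->|->].
    rewrite map_polyC hornerC.
    transitivity ('X_[mnmwiden U_(j)] : {mpoly F[k.+1]}); first exact: mwidenX.
    rewrite mnmwiden1; do 2 f_equal; apply: val_inj.
    by rewrite /= /bump leqNgt (ltn_ord j).
  by rewrite (map_polyX (@mwiden k F)) hornerX.
Qed.

Lemma phi_eval k (h : {mpoly F[k.+1]}) v s :
  h.@[ext v s] = (map_poly (meval v) (phi h)).[s].
Proof.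
apply: (@mpoly_morph_eq _ _ _ (meval (ext v s)) (fun h => (map_poly (meval v) (phi h)).[s])) => //=.
- by move=> x y; rewrite mevalD.
- by move=> x y; rewrite /phi !rmorphD hornerD.
- by move=> x y; rewrite mevalM.
- by move=> x y; rewrite /phi !rmorphM hornerM.
- by rewrite meval1.
- by rewrite /phi !rmorph1 hornerC.
- move=> c; rewrite mevalC /phi mmapC /= map_polyC hornerC.
  by rewrite [RHS]mevalC.
- move=> i; rewrite mevalXU /phi mmapX mmap1U /Xf /ext.
  case: unliftP => [j _|_].
    by rewrite map_polyC hornerC [RHS]mevalXU.
  by rewrite map_polyX hornerX.
Qed.

Lemma mpoly_vanish k (h : {mpoly F[k]}) : (forall v, h.@[v] = 0) -> h = 0.
Proof.
elim: k h => [|k IH] h hv.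
  have e : forall x : {mpoly F[0]}, id x = (x.@[fun i => 0])%:MP.
    apply: (@mpoly_morph_eq F 0 _ id (fun h => (h.@[fun i => 0])%:MP)) => //=.
    - by move=> x y; rewrite mevalD rmorphD.
    - by move=> x y; rewrite mevalM rmorphM.
    - by rewrite meval1.
    - by move=> c; rewrite mevalC.
    - by case.
  by rewrite (e h) hv mpolyC0.
rewrite -[h]psi_phi.
suff -> : phi h = 0 by rewrite /psi map_poly0 horner0.
apply/polyP => e; rewrite coef0; apply: IH => v.
have : map_poly (meval v) (phi h) = 0.
  by apply: poly_vanish => s; rewrite -phi_eval hv.
by move/(congr1 (fun P : {poly F} => P`_e)); rewrite coef_map coef0.
Qed.

End Ident.
Lemma Mmat_row (F : fieldType) r n (o : 'I_r.+1 -> bool) (D : 'I_r.+1 -> 'M[F]_n)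
  (i j : 'I_n) (y : 'rV[F]_r.+1) a :
  (y *m Mmat o D i j) 0 a = y 0 (qhead o a) * D a j j - y 0 (qtail o a) * D a i i.
Proof.
rewrite mxE; under eq_bigr do rewrite Mmat_entry mulrBr.
by rewrite sumrB !sum_delta.
Qed.

Section Dom.
Variable R : realType.
Variables (r n : nat) (o : 'I_r.+1 -> bool).

Lemma normc_ge0 (x : R[i]) : 0 <= normc x.
Proof. case: x => a b; exact: sqrtr_ge0. Qed.
Lemma normc_one : normc (1 : R[i]) = 1.
Proof. by rewrite /normc /= expr1n expr0n addr0 sqrtr1. Qed.
Lemma normc_nat (m : nat) : normc (m%:R : R[i]) = m%:R.
Proof. by rewrite -[LHS]/(normc (1 *+ m)) normcMn normc_one. Qed.

Definition cdiag (a : 'I_r.+1) (k : 'I_n) : R[i] :=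
  if o a then (n - k)%:R else (k.+1)%:R.
Definition Cm : 'I_r.+1 -> 'M[R[i]]_n :=
  fun a => \matrix_(k, l) ((k == l)%:R * cdiag a k).

Lemma Cm_diag a k : Cm a k k = cdiag a k.
Proof. by rewrite mxE eqxx mul1r. Qed.

Lemma Cm_upper a : upper_tri (Cm a).
Proof. by move=> k l lk; rewrite mxE (_ : (k == l) = false) ?mul0r // -val_eqE /= gtn_eqF. Qed.

Lemma Cm_good : good o Cm.
Proof.
move=> i j ij; apply/det0P => [[y nz yM]].
have eq a : y 0 (qhead o a) * cdiag a j = y 0 (qtail o a) * cdiag a i.
  have := congr1 (fun M : 'rV[R[i]]_r.+1 => M 0 a) yM.
  rewrite Mmat_row !Cm_diag mxE => /eqP; rewrite subr_eq0 => /eqP //.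
pose N := fun v => normc (y 0 v).
have [v0 hmax] : exists v0, forall v, N v <= N v0.
  case: (@arg_maxP _ _ _ ord0 xpredT N) => //= v0 _ h.
  by exists v0 => v; apply: h.
have hj := ltn_ord j.
have N0 : N v0 = 0.
  have hge : 0 <= N v0 by apply: normc_ge0.
  have := eq v0; rewrite /qhead /qtail /cdiag; case: (o v0) => e.
  - move/(congr1 (@normc R)): e; rewrite !normcM !normc_nat => e.
    have h1 := hmax (cyc_next v0); rewrite /N in h1 hge e.
    have h2 : 0 <= normc (y 0 (cyc_next v0)) by apply: normc_ge0.
    have lt : ((n - j)%:R < (n - i)%:R :> R) by rewrite ltr_nat; lia.
    have lt0 : (0 : R) <= (n - j)%:R by apply: ler0n.
    apply/eqP; rewrite /N eq_le hge andbT; nra.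
  - move/(congr1 (@normc R)): e; rewrite !normcM !normc_nat => e.
    have h1 := hmax (cyc_next v0); rewrite /N in h1 hge e.
    have h2 : 0 <= normc (y 0 (cyc_next v0)) by apply: normc_ge0.
    have lt : ((i.+1)%:R < (j.+1)%:R :> R) by rewrite ltr_nat; lia.
    have lt0 : (0 : R) <= (i.+1)%:R by apply: ler0n.
    apply/eqP; rewrite /N eq_le hge andbT; nra.
move/negP: nz; apply; apply/eqP/rowP => v; rewrite mxE; apply: eq0_normc.
by apply/eqP; rewrite eq_le normc_ge0 andbT -N0 hmax.
Qed.

End Dom.
Section Dens.
Variable R : realType.
Variables (r n : nat) (o : 'I_r.+1 -> bool).
Variable p : {mpoly R[i][nbvars r n]}.
Hypothesis Hinv : U_invariant o p.

Lemma meval_poly m (q : {mpoly R[i][m]}) (V : 'I_m -> {poly R[i]}) s :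
  ((map_mpoly polyC q).@[V]).[s] = q.@[fun t => (V t).[s]].
Proof.
apply: (@mpoly_morph_eq _ _ _ (fun q => ((map_mpoly polyC q).@[V]).[s])
   (fun q => q.@[fun t => (V t).[s]])) => //=.
- by move=> x y; rewrite rmorphD mevalD hornerD.
- by move=> x y; rewrite mevalD.
- by move=> x y; rewrite rmorphM mevalM hornerM.
- by move=> x y; rewrite mevalM.
- by rewrite rmorph1 meval1 hornerC.
- by rewrite meval1.
- by move=> c; rewrite map_mpolyC mevalC hornerC mevalC.
- by move=> t; rewrite map_mpolyX mevalXU mevalXU.
Qed.

Lemma all_upper (A : 'I_r.+1 -> 'M[R[i]]_n) : (forall a, upper_tri (A a)) ->
  p.@[bcoords A] = p.@[bcoords (diagpart A)].
Proof.
move=> Aup.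
pose As (s : R[i]) := fun a => \matrix_(k, l) ((1 - s) * @Cm R r n o a k l + s * A a k l).
pose AP := fun a => \matrix_(k, l) ((1 - 'X) * (@Cm R r n o a k l)%:P + 'X * (A a k l)%:P)
  : 'M[{poly R[i]}]_n.
pose DP := fun a => \matrix_(k, l) ((k == l)%:R * AP a k l) : 'M[{poly R[i]}]_n.
pose Pf := (map_mpoly polyC p).@[bcoords AP] - (map_mpoly polyC p).@[bcoords DP].
pose MP (i0 j0 : 'I_n) := \matrix_(v, a) ((v == qhead o a)%:R * AP a j0 j0
   - (v == qtail o a)%:R * AP a i0 i0) : 'M[{poly R[i]}]_r.+1.
pose G := \prod_(i0 : 'I_n) \prod_(j0 : 'I_n | (i0 < j0)%N) \det (MP i0 j0).
have hAP s a k l : (AP a k l).[s] = As s a k l.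
  by rewrite !mxE !hornerE.
have Pf_eval s : Pf.[s] = p.@[bcoords (As s)] - p.@[bcoords (diagpart (As s))].
  rewrite hornerD hornerN !meval_poly; congr (_ - _); apply: meval_eq => t.
    by rewrite /bcoords hAP.
  by rewrite /bcoords !mxE !(hornerE, hornerMn).
have G_eval s : G.[s] = \prod_(i0 : 'I_n) \prod_(j0 : 'I_n | (i0 < j0)%N)
    \det (Mmat o (As s) i0 j0).
  rewrite -horner_evalE rmorph_prod; apply: eq_bigr => i0 _.
  rewrite rmorph_prod; apply: eq_bigr => j0 _.
  rewrite -det_map_mx; congr (\det _); apply/matrixP => v a.
  by rewrite !mxE /= horner_evalE !(hornerE, hornerMn).
have As_up s a : upper_tri (As s a).
  by move=> k l lk; rewrite mxE Aup // (@Cm_upper R r n o) // !mulr0 addr0.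
have PG : Pf * G = 0.
  apply: poly_vanish => s; rewrite hornerM.
  have [->|nz] := eqVneq G.[s] 0; first by rewrite mulr0.
  suff -> : Pf.[s] = 0 by rewrite mul0r.
  rewrite Pf_eval (gen_case Hinv (As_up s)) ?subrr //.
  move=> i0 j0 ij; apply: contra nz => /eqP d0.
  by rewrite G_eval (bigD1 i0) //= (bigD1 j0) //= d0 mul0r mul0r.
have G0 : G != 0.
  apply/eqP => G0; have gC := @Cm_good R r n o.
  have : G.[0] = 0 by rewrite G0 horner0.
  rewrite G_eval => /eqP; rewrite prodf_seq_eq0 => /hasP [i0 _] /=.
  rewrite prodf_seq_eq0 => /hasP [j0 _] /= /andP [ij /eqP d0].
  move: (gC i0 j0 ij); rewrite -d0; apply/negP; rewrite negbK.
  by apply/eqP; congr (\det _); apply/matrixP => v a; rewrite !mxE !subr0 !mul1r !mul0r !addr0.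
have Pf0 : Pf = 0 by move/eqP: PG; rewrite mulf_eq0 (negbTE G0) orbF => /eqP.
have := Pf_eval 1; rewrite Pf0 horner0 => /esym /eqP; rewrite subr_eq0 => /eqP e.
have eA a k l : As 1 a k l = A a k l by rewrite mxE subrr mul0r add0r mul1r.
transitivity p.@[bcoords (As 1)]; first by apply: bc_eq => a k l; rewrite eA.
rewrite e; apply: bc_eq => a k l.
by rewrite [LHS]mxE [RHS]mxE eA.
Qed.

End Dens.
Section Final.
Variable R : realType.
Variables (r n : nat) (o : 'I_r.+1 -> bool).

Lemma bcoords_rank (F : nzRingType) (B : 'I_r.+1 -> 'M[F]_n) (y : bidx r n) :
  bcoords B (enum_rank y) = B (val y).1 (val y).2.1 (val y).2.2.
Proof. by rewrite /bcoords enum_rankK. Qed.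

Lemma uact_diag (u A : 'I_r.+1 -> 'M[R[i]]_n) a k :
  (forall v, unitri (u v)) -> (forall a, upper_tri (A a)) ->
  uact o u A a k k = A a k k.
Proof.
move=> hu hA; rewrite /uact.
have [h1 h2] := hu (qhead o a); have [h3 h4] := unitri_inv (hu (qtail o a)).
by rewrite diag_mul ?diag_mul ?h2 ?h4 ?mul1r ?mulr1 //; apply: upper_mul.
Qed.

Definition Lproj : (nbvars r n).-tuple {mpoly R[i][ntvars r n]} :=
  [tuple (let x := val (enum_val k) in
          if x.2.1 == x.2.2 then 'X_(enum_rank (x.1, x.2.1)) else 0) | k < nbvars r n].

Theorem main (p : {mpoly R[i][nbvars r n]}) :
  U_invariant o p <->
  exists q : {mpoly R[i][ntvars r n]}, p = comp_mpoly (diag_vars R[i] r n) q.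
Proof.
split; last first.
  move=> [q ->] u A hu hA; rewrite !comp_mpoly_meval; apply: meval_eq => k.
  by rewrite tnth_mktuple !mevalXU !bcoords_rank /= uact_diag.
move=> Hinv; exists (comp_mpoly Lproj p).
apply/eqP; rewrite -subr_eq0; apply/eqP; apply: mpoly_vanish => v.
rewrite mevalB !comp_mpoly_meval; apply/eqP; rewrite subr_eq0; apply/eqP.
pose A : 'I_r.+1 -> 'M[R[i]]_n := fun a => \matrix_(k, l)
  (if @insub _ (fun y : 'I_r.+1 * ('I_n * 'I_n) => (y.2.1 <= y.2.2)%N) (bidx r n) (a, (k, l))
     is Some y then v (enum_rank y) else 0).
have Aup a : upper_tri (A a).
  by move=> k l lk; rewrite mxE insubF //= leqNgt lk.
have eA : forall t, bcoords A t = v t.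
  move=> t; rewrite /bcoords mxE; move: (enum_valK t).
  case: (enum_val t) => [[a [k l]] h] /= e.
  rewrite insubT /= -e; congr (v (enum_rank _)); exact: val_inj.
transitivity p.@[bcoords A]; first by apply: meval_eq => t; rewrite eA.
rewrite (all_upper Hinv Aup); apply: meval_eq => t.
rewrite tnth_mktuple /bcoords !mxE.
move: (enum_valK t); case: (enum_val t) => [[a [k l]] h] /= e.
case: (eqVneq k l) => [kl|nkl]; last by rewrite mul0r mevalC.
subst l; rewrite mul1r mevalXU tnth_mktuple mevalXU enum_rankK /= insubT /=.
congr (v (enum_rank _)); exact: val_inj.
Qed.

End Final.

Unset Implicit Arguments.
Set Strict Implicit.

Theorem mainTheorem4 (R : realType) (r n : nat) (o : 'I_r.+1 -> bool)
  (p : {mpoly R[i][nbvars r n]}) :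
  U_invariant o p <->
  exists q : {mpoly R[i][ntvars r n]}, p = comp_mpoly (diag_vars R[i] r n) q.
Proof. exact: main. Qed.
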